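(* Let $H$ be a finite-dimensional complex Hilbert space, $u\in H$ a unit vector, $P=|u\rangle\langle u|$, and $R\in B(H)_+$. Define $R_0:=R$ and $R_{n+1}:=R_n^{1/2}(I-P)R_n^{1/2}$ for $n\ge0$. For each $n\ge0$ set $K_n:=\ker R_n$ and $E_n:=K_n^\perp=\mathrm{ran}(R_n)$. Then: (1) $K_n\subseteq K_{n+1}$ and $E_{n+1}\subseteq E_n$ for all $n\ge0$. (2) There exist $N\ge0$ and a subspace $E\subseteq H$ such that $E_n=E$ for all $n\ge N$. (3) For every $n\ge N$, $E$ reduces $R_n$, and $R_n=0\oplus T_n$ with respect to $H=E^\perp\oplus E$, where $T_n:=R_n|_E\in B(E)_+$ is strictly positive on $E$. (4) Let $u_E:=P_Eu\in E$, where $P_E$ is the orthogonal projection onto $E$. Then for every $n\ge N$, $$T_{n+1}=T_n^{1/2}\bigl(I_E-|u_E\rangle\langle u_E|\bigr)T_n^{1/2}.$$ (5) If $u_E=0$, then $T_{n+1}=T_n$ for all $n\ge N$. If $u_E\neq0$, then $0<\|u_E\|<1$ and $\det T_{n+1}=(1-\|u_E\|^2)\det T_n$ for $n\ge N$; hence $\det T_n=(1-\|u_E\|^2)^{n-N}\det T_N$ for $n\ge N$, and in particular $\det T_n\to0$.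
   Context: For vectors $x,y$, $|x\rangle\langle y|$ denotes the operator $z\mapsto\langle y,z\rangle x$. $B(H)_+$ denotes positive operators; $R^{1/2}$ is the positive square root. $\det$ of an operator on $E$ is the determinant on the space $E$. *)

(* Defs.v *)
From HB Require Import structures.
From Stdlib Require Import ClassicalEpsilon.
From mathcomp Require Import all_boot all_order all_algebra.
From mathcomp Require Import reals.
From mathcomp.real_closed Require Import complex.
Set Implicit Arguments. Unset Strict Implicit. Unset Printing Implicit Defensive.
Import Order.TTheory GRing.Theory Num.Theory.
Local Open Scope ring_scope.

(* Finite-dimensional Hilbert space H = 'cV[C]_n (column vectors), C a
   numeric closed field (instantiated with the complex numbers R[i],
   R : realType, in the statement). *)

Section Defs.
Variable C : numClosedFieldType.

Definition adjmx m p (A : 'M[C]_(m, p)) : 'M[C]_(p, m) := (map_mx Num.conj A)^T.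

(* inner product <x, y>, conjugate-linear in x, linear in y *)
Definition inner m (x y : 'cV[C]_m) : C := (adjmx x *m y) 0 0.

Definition vnorm m (x : 'cV[C]_m) : C := sqrtC (inner x x).

Definition ketbra m (x y : 'cV[C]_m) : 'M[C]_m := x *m adjmx y.

Definition psd m (A : 'M[C]_m) : Prop := forall x : 'cV[C]_m, 0 <= inner x (A *m x).

Definition psqrt m (A : 'M[C]_m) : 'M[C]_m :=
  epsilon (inhabits 0) (fun S => psd S /\ S *m S = A).

Fixpoint Rseq m (P R : 'M[C]_m) (k : nat) : 'M[C]_m :=
  match k with
  | 0 => R
  | k'.+1 => psqrt (Rseq P R k') *m (1 - P) *m psqrt (Rseq P R k')
  end.

Definition kerP m (A : 'M[C]_m) : 'cV[C]_m -> Prop := fun x => A *m x = 0.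
Definition orthP m (S : 'cV[C]_m -> Prop) : 'cV[C]_m -> Prop :=
  fun x => forall y, S y -> inner y x = 0.
Definition colspan m d (V : 'M[C]_(m, d)) : 'cV[C]_m -> Prop :=
  fun x => exists y : 'cV[C]_d, x = V *m y.
End Defs.

(* Main.v *)
Require Import Defs.
From HB Require Import structures.
From Stdlib Require Import ClassicalEpsilon Classical.
From mathcomp Require Import all_boot all_order all_algebra.
From mathcomp Require Import reals.
From mathcomp.real_closed Require Import complex.
Set Implicit Arguments. Unset Strict Implicit. Unset Printing Implicit Defensive.
Import Order.TTheory GRing.Theory Num.Theory.
Local Open Scope ring_scope.

Section Lin.
Variable C : numClosedFieldType.
Implicit Types (m p q : nat).

Lemma adjmxE m p (A : 'M[C]_(m, p)) : adjmx A = map_mx Num.conj A^T.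
Proof. by rewrite /adjmx map_trmx. Qed.

Lemma adjmxK m p (A : 'M[C]_(m, p)) : adjmx (adjmx A) = A.
Proof. by apply/matrixP=> i j; rewrite /adjmx !mxE conjCK. Qed.

Lemma adjmxM m p q (A : 'M[C]_(m, p)) (B : 'M[C]_(p, q)) :
  adjmx (A *m B) = adjmx B *m adjmx A.
Proof. by rewrite /adjmx map_mxM trmx_mul. Qed.

Lemma adjmxD m p (A B : 'M[C]_(m, p)) : adjmx (A + B) = adjmx A + adjmx B.
Proof. by rewrite /adjmx map_mxD linearD. Qed.

Lemma adjmxN m p (A : 'M[C]_(m, p)) : adjmx (- A) = - adjmx A.
Proof. by rewrite /adjmx map_mxN linearN. Qed.

Lemma adjmxB m p (A B : 'M[C]_(m, p)) : adjmx (A - B) = adjmx A - adjmx B.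
Proof. by rewrite adjmxD adjmxN. Qed.

Lemma adjmx1 m : adjmx (1%:M : 'M[C]_m) = 1%:M.
Proof. by rewrite /adjmx map_mx1 trmx1. Qed.

Lemma adjmx0 m p : adjmx (0 : 'M[C]_(m, p)) = 0.
Proof. by apply/matrixP=> i j; rewrite /adjmx !mxE conjC0. Qed.

Lemma adjmxZ m p a (A : 'M[C]_(m, p)) : adjmx (a *: A) = a^* *: adjmx A.
Proof. by apply/matrixP=> i j; rewrite /adjmx !mxE rmorphM. Qed.

Lemma adjmx_inj m p (A B : 'M[C]_(m, p)) : adjmx A = adjmx B -> A = B.
Proof. by move=> /(congr1 (@adjmx _ _ _)); rewrite !adjmxK. Qed.

Lemma adjmx_eq0 m p (A : 'M[C]_(m, p)) : (adjmx A == 0) = (A == 0).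
Proof.
apply/eqP/eqP=> [h|->]; last exact: adjmx0.
by apply: adjmx_inj; rewrite h adjmx0.
Qed.

Lemma innerE m (x y : 'cV[C]_m) : inner x y = \sum_i (x i 0)^* * y i 0.
Proof. by rewrite /inner !mxE; apply: eq_bigr => i _; rewrite /adjmx !mxE. Qed.

Lemma inner_ge0 m (x : 'cV[C]_m) : 0 <= inner x x.
Proof.
rewrite innerE; apply: sumr_ge0 => i _.
by rewrite mulrC -normCK exprn_ge0.
Qed.

Lemma inner_eq0 m (x : 'cV[C]_m) : (inner x x == 0) = (x == 0).
Proof.
apply/eqP/eqP=> [h|->]; last first.
  by rewrite innerE big1 // => i _; rewrite mxE mulr0.
apply/matrixP=> i j; rewrite (ord1 j) mxE.
move: h; rewrite innerE => /eqP; rewrite psumr_eq0 => [/allP/(_ i)|k _].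
  rewrite mem_index_enum mulrC -normCK => /(_ isT) /eqP/eqP.
  by rewrite sqrf_eq0 normr_eq0 => /eqP.
by rewrite mulrC -normCK exprn_ge0.
Qed.

Lemma inner_gt0 m (x : 'cV[C]_m) : x != 0 -> 0 < inner x x.
Proof. by move=> nz; rewrite lt_def inner_eq0 nz inner_ge0. Qed.

Lemma inner_adj m p (A : 'M[C]_(m, p)) x y : inner x (A *m y) = inner (adjmx A *m x) y.
Proof. by rewrite /inner adjmxM adjmxK mulmxA. Qed.

Lemma inner_conj m (x y : 'cV[C]_m) : inner y x = (inner x y)^*.
Proof.
rewrite !innerE rmorph_sum; apply: eq_bigr => i _.
by rewrite rmorphM /= conjCK mulrC.
Qed.

Lemma innerDr m (x y z : 'cV[C]_m) : inner x (y + z) = inner x y + inner x z.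
Proof. by rewrite /inner mulmxDr mxE. Qed.
Lemma innerDl m (x y z : 'cV[C]_m) : inner (y + z) x = inner y x + inner z x.
Proof. by rewrite /inner adjmxD mulmxDl mxE. Qed.
Lemma innerZr m a (x y : 'cV[C]_m) : inner x (a *: y) = a * inner x y.
Proof. by rewrite /inner -scalemxAr mxE. Qed.
Lemma innerZl m a (x y : 'cV[C]_m) : inner (a *: y) x = a^* * inner y x.
Proof. by rewrite /inner adjmxZ -scalemxAl mxE. Qed.
Lemma innerNr m (x y : 'cV[C]_m) : inner x (- y) = - inner x y.
Proof. by rewrite -scaleN1r innerZr mulN1r. Qed.
Lemma inner0r m (x : 'cV[C]_m) : inner x 0 = 0.
Proof. by rewrite /inner mulmx0 mxE. Qed.

Lemma quad0 m (B : 'M[C]_m) : (forall x, inner x (B *m x) = 0) -> B = 0.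
Proof.
move=> h.
have hxy : forall x y, inner x (B *m y) = 0.
  move=> x y.
  have h1 := h (x + y); have h2 := h (x + 'i *: y).
  rewrite !mulmxDr !innerDr !innerDl h h !add0r addr0 in h1 h2.
  rewrite -!scalemxAr !innerZr !innerZl h !mulr0 addr0 in h2.
  rewrite conjCi mulNr addrC -mulrBr in h2.
  move/eqP: h2; rewrite mulf_eq0 (negPf (neq0Ci _)) /= subr_eq0 => /eqP e.
  move: h1; rewrite e -mulr2n => /eqP; rewrite mulrn_eq0 /= => /eqP e2.
  by rewrite e2.
apply/matrixP=> i j.
have := hxy (B *m delta_mx j 0) (delta_mx j 0).
move/eqP; rewrite inner_eq0 -colE => /eqP /colP /(_ i).
by rewrite !mxE.
Qed.

End Lin.

Section Psd.
Variable C : numClosedFieldType.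
Implicit Types (m p q : nat).

Lemma psd_herm m (A : 'M[C]_m) : psd A -> adjmx A = A.
Proof.
move=> hA; apply/eqP; rewrite -subr_eq0; apply/eqP.
apply: quad0 => x.
rewrite mulmxBl innerDr innerNr [inner x (adjmx A *m x)]inner_adj adjmxK inner_conj.
by rewrite conj_Creal ?subrr // ger0_real.
Qed.

Lemma diag_delta m (d : 'rV[C]_m) i :
  diag_mx d *m (delta_mx i 0 : 'cV[C]_m) = d 0 i *: delta_mx i 0.
Proof.
apply/matrixP=> k j; rewrite mul_diag_mx !mxE (ord1 j) eqxx andbT.
by case: eqP => [->|]; rewrite ?mulr1 ?mulr0.
Qed.

Lemma inner_delta m (i : 'I_m) : inner (delta_mx i 0 : 'cV[C]_m) (delta_mx i 0) = 1.
Proof.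
rewrite innerE (bigD1 i) //= big1 => [|k /negPf ki]; rewrite !mxE ?ki ?eqxx /=.
  by rewrite conjC1 mulr1 addr0.
by rewrite conjC0 mul0r.
Qed.

Lemma inner_diag m (d : 'rV[C]_m) y :
  inner y (diag_mx d *m y) = \sum_i d 0 i * ((y i 0)^* * y i 0).
Proof.
rewrite innerE; apply: eq_bigr => i _; rewrite mul_diag_mx mxE.
by rewrite mulrCA.
Qed.

Lemma psd_diag m (d : 'rV[C]_m) : (forall i, 0 <= d 0 i) -> psd (diag_mx d).
Proof.
move=> hd y; rewrite inner_diag; apply: sumr_ge0 => i _.
by rewrite mulr_ge0 // mulrC -normCK exprn_ge0.
Qed.

Definition unitary m (U : 'M[C]_m) := adjmx U *m U = 1%:M /\ U *m adjmx U = 1%:M.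

Lemma psd_spectral m (A : 'M[C]_m) : psd A ->
  exists U d, unitary U /\ A = adjmx U *m diag_mx d *m U /\ forall i, 0 <= d 0 i.
Proof.
move=> hA; have hH := psd_herm hA.
have nA : A \is normalmx by apply/normalmxP; rewrite -adjmxE hH.
have /orthomx_spectralP eA := nA.
set U := spectralmx A in eA; set d := spectral_diag A in eA.
have uU : U \is unitarymx by apply: spectral_unitarymx.
have U1 : U *m adjmx U = 1%:M by rewrite adjmxE; apply/unitarymxP.
have U2 : adjmx U *m U = 1%:M.
  by rewrite adjmxE -[LHS]mul1mx mulmxA mulmxKtV.
have eA' : A = adjmx U *m diag_mx d *m U.
  by rewrite {1}eA invmx_unitary // -adjmxE.
exists U, d; split; first by [].
split; first by [].
move=> i; have := hA (adjmx U *m delta_mx i 0).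
have hUx : forall x : 'cV_m, U *m (adjmx U *m x) = x by move=> x; rewrite mulmxA U1 mul1mx.
rewrite eA' -!mulmxA inner_adj adjmxK !hUx.
by rewrite diag_delta innerZr inner_delta mulr1.
Qed.

Lemma psd_sqrt_ex m (A : 'M[C]_m) : psd A -> exists S, psd S /\ S *m S = A.
Proof.
move=> /psd_spectral [U [d [[U1 U2] [eA hd]]]].
pose s := \row_i sqrtC (d 0 i).
exists (adjmx U *m diag_mx s *m U); split.
  rewrite /psd => x; rewrite -!mulmxA inner_adj adjmxK.
  by apply: psd_diag => i; rewrite mxE sqrtC_ge0.
rewrite -!mulmxA (mulmxA U) U2 mul1mx (mulmxA (diag_mx s)) mulmx_diag mulmxA eA.
congr (_ *m diag_mx _ *m _); apply/rowP=> i; rewrite !mxE -expr2 sqrtCK //.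
Qed.

Lemma psqrtP m (A : 'M[C]_m) : psd A -> psd (psqrt A) /\ psqrt A *m psqrt A = A.
Proof.
move=> hA; exact: (epsilon_spec (inhabits (0 : 'M[C]_m)) (fun S => psd S /\ S *m S = A) (psd_sqrt_ex hA)).
Qed.

Lemma psd_ker m (A : 'M[C]_m) x : psd A -> inner x (A *m x) = 0 -> A *m x = 0.
Proof.
move=> hA; have [hS eS] := psqrtP hA.
rewrite -eS -mulmxA inner_adj (psd_herm hS) => /eqP.
by rewrite inner_eq0 => /eqP ->; rewrite mulmx0.
Qed.

Lemma col_ext m p (M N : 'M[C]_(m, p)) :
  (forall b, M *m (delta_mx b 0 : 'cV[C]_p) = N *m delta_mx b 0) -> M = N.
Proof.
move=> h; apply/matrixP=> a b.
have := congr1 (fun X : 'cV[C]_m => X a 0) (h b).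
by rewrite /= -!colE !mxE.
Qed.

Lemma psd_sqrt_uniq m (S T : 'M[C]_m) : psd S -> psd T -> S *m S = T *m T -> S = T.
Proof.
move=> hS hT eST.
have [U [d [[U1 U2] [eS hd]]]] := psd_spectral hS.
have hTH := psd_herm hT.
have key : forall i : 'I_m, T *m (adjmx U *m (delta_mx i 0 : 'cV[C]_m)) = d 0 i *: (adjmx U *m delta_mx i 0).
  move=> i; set v := adjmx U *m (delta_mx i 0 : 'cV[C]_m).
  have Sv : S *m v = d 0 i *: v.
    by rewrite /v eS -!mulmxA (mulmxA U) U2 mul1mx diag_delta scalemxAr.
  have TTv : T *m (T *m v) = (d 0 i ^+ 2) *: v.
    by rewrite mulmxA -eST -mulmxA Sv -scalemxAr Sv scalerA expr2.
  have [d0|dn0] := eqVneq (d 0 i) 0.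
    rewrite d0 scale0r; apply: psd_ker => //.
    move: TTv; rewrite d0 expr0n /= scale0r => TTv.
    have : inner (T *m v) (T *m v) = 0 by rewrite inner_adj hTH TTv /inner adjmx0 mul0mx mxE.
    by move/eqP; rewrite inner_eq0 => /eqP ->; rewrite inner0r.
  set z := T *m v - d 0 i *: v.
  have Tz : T *m z = - d 0 i *: z.
    rewrite /z mulmxBr TTv -scalemxAr scalerBr scalerA mulNr -expr2 scaleNr /=.
    by rewrite scaleNr opprK addrC.
  have := hT z; rewrite Tz innerZr.
  have := inner_ge0 z.
  rewrite le_eqVlt => /orP[/eqP z0|zp].
    by move=> _; apply/eqP; rewrite -subr_eq0 -/z -inner_eq0 -z0.
  rewrite pmulr_lge0 // oppr_ge0 => dle0.
  have : d 0 i = 0 by apply/eqP; rewrite eq_le dle0 hd.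
  by move/eqP; rewrite (negPf dn0).
have eT : T *m adjmx U = adjmx U *m diag_mx d.
  apply: col_ext => b.
  by rewrite -mulmxA key -!mulmxA diag_delta scalemxAr.
rewrite eS -eT -mulmxA U1 mulmx1 //.
Qed.

Lemma psd_sqrt_eq m (A S : 'M[C]_m) : psd A -> psd S -> S *m S = A -> psqrt A = S.
Proof.
move=> hA hS eS; have [h1 h2] := psqrtP hA.
by apply: psd_sqrt_uniq => //; rewrite h2.
Qed.

End Psd.

Section Range.
Variable C : numClosedFieldType.
Implicit Types (m p q : nat).

Lemma inner0l m (x : 'cV[C]_m) : inner 0 x = 0.
Proof. by rewrite /inner adjmx0 mul0mx mxE. Qed.

Lemma inner_delta_l m (i : 'I_m) (w : 'cV[C]_m) : inner (delta_mx i 0) w = w i 0.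
Proof.
rewrite innerE (bigD1 i) //= big1 => [|k /negPf ki]; rewrite !mxE ?ki ?eqxx /=.
  by rewrite conjC1 mul1r addr0.
by rewrite conjC0 mul0r.
Qed.

Lemma ran_psd m (A : 'M[C]_m) x : psd A -> (orthP (kerP A) x <-> colspan A x).
Proof.
move=> hA; have hH := psd_herm hA; split; last first.
  move=> [y ->] z; rewrite /kerP => Az.
  by rewrite inner_adj hH Az inner0l.
have [U [d [[U1 U2] [eA hd]]]] := psd_spectral hA.
move=> hx.
pose dp := \row_i (d 0 i)^-1.
exists (adjmx U *m diag_mx dp *m U *m x).
have hUx : forall y : 'cV_m, U *m (adjmx U *m y) = y by move=> y; rewrite mulmxA U2 mul1mx.
rewrite eA -!mulmxA hUx (mulmxA (diag_mx d)) mulmx_diag.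
set w := U *m x.
have -> : diag_mx (\row_j (d 0 j * dp 0 j)) *m w = w.
  apply/matrixP=> i j; rewrite (ord1 j) mul_diag_mx mxE [X in X * _]mxE [dp 0 i]mxE.
  have [d0|dn0] := eqVneq (d 0 i) 0.
    have ker : kerP A (adjmx U *m delta_mx i 0).
      by rewrite /kerP eA -!mulmxA hUx diag_delta d0 scale0r mulmx0.
    have := hx _ ker; rewrite -inner_adj inner_delta_l => ->.
    by rewrite mulr0.
  by rewrite mulfV // mul1r.
by rewrite /w mulmxA U1 mul1mx.
Qed.

Lemma colspan_submx m p (A : 'M[C]_(m, p)) x : colspan A x <-> (x^T <= A^T)%MS.
Proof.
split=> [[y ->]|/submxP [D eD]].
  by apply/submxP; exists y^T; rewrite trmx_mul.
by exists D^T; rewrite -[x]trmxK eD trmx_mul trmxK.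
Qed.

Lemma colspan_sub m p q (A : 'M[C]_(m, p)) (B : 'M[C]_(m, q)) :
  (forall x, colspan A x -> colspan B x) -> (A^T <= B^T)%MS.
Proof.
move=> h; apply/row_subP => i.
have -> : row i A^T = (A *m delta_mx i 0)^T by rewrite -colE tr_col.
by apply/colspan_submx; apply: h; exists (delta_mx i 0).
Qed.

Lemma colspan_fact m p q (A : 'M[C]_(m, p)) (B : 'M[C]_(m, q)) :
  (forall x, colspan A x -> colspan B x) -> exists Y, A = B *m Y.
Proof.
move=> /colspan_sub /submxP [D eD]; exists D^T.
by rewrite -[A]trmxK eD trmx_mul trmxK.
Qed.

Lemma colspan_trans m p q (A : 'M[C]_(m, p)) (B : 'M[C]_(m, q)) x :
  (A^T <= B^T)%MS -> colspan A x -> colspan B x.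
Proof.
by move=> sAB /colspan_submx sx; apply/colspan_submx; apply: submx_trans sAB.
Qed.

Lemma adjmx_mx11 m (x y : 'cV[C]_m) : adjmx x *m y = (inner x y)%:M.
Proof. by rewrite [LHS]mx11_scalar. Qed.

Lemma det_sylvester m (x : 'cV[C]_m) (y : 'rV[C]_m) :
  \det (1%:M - x *m y) = 1 - (y *m x) 0 0.
Proof.
pose B := block_mx (1%:M : 'M_m) x y (1%:M : 'M_1).
have e1 : B = block_mx 1%:M 0 y 1%:M *m block_mx 1%:M x 0 (1%:M - y *m x).
  rewrite mulmx_block ?mul1mx ?mulmx1 ?mul0mx ?mulmx0 ?addr0 ?add0r.
  by rewrite addrC subrK.
have e2 : B = block_mx 1%:M x 0 1%:M *m block_mx (1%:M - x *m y) 0 y 1%:M.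
  rewrite mulmx_block ?mul1mx ?mulmx1 ?mul0mx ?mulmx0 ?addr0 ?add0r.
  by rewrite subrK.
have := congr1 determinant e1; rewrite {1}e2 !det_mulmx.
rewrite det_lblock det_ublock det_ublock det_lblock !det1 !mul1r !mulr1.
by move=> ->; rewrite det_mx11 !mxE.
Qed.

End Range.

Lemma bernoulli_ineq (F : numDomainType) (h : F) k : 0 <= h -> 1 + h *+ k <= (1 + h) ^+ k.
Proof.
move=> h0; elim: k => [|k IH]; first by rewrite mulr0n addr0 expr0.
rewrite exprS mulrS.
apply: le_trans (_ : (1 + h) * (1 + h *+ k) <= _); last first.
  by rewrite ler_wpM2l // addr_ge0.
rewrite mulrDl mul1r mulrDr mulr1 addrA (addrAC 1) lerD2l lerDl.
by rewrite mulr_ge0 // mulrn_wge0.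
Qed.

Lemma archiC (R : realType) (x : R[i]) : 0 <= x -> exists k : nat, x < k%:R.
Proof.
case: x => a b h; have b0 : b = 0 by have := ger0_Im h.
subst b; have a0 : 0 <= a by move: h; rewrite lecE /= => /andP[_].
exists (Num.bound a).
rewrite -[X in _ < X](rmorph_nat (real_complex R)) complexr0 ltcR.
exact: archi_boundP.
Qed.

Lemma geom_small (R : realType) (c D eps : R[i]) : 0 <= c -> c < 1 -> 0 <= D -> 0 < eps ->
  exists M, forall k, (M <= k)%N -> c ^+ k * D < eps.
Proof.
move=> c0 c1 D0 e0.
suff [M hM] : exists M, c ^+ M * D < eps.
  exists M => k kM; apply: le_lt_trans hM.
  by rewrite ler_wpM2r // ler_wiXn2l // ltW.
have [->|cn0] := eqVneq c 0.
  by exists 1%N; rewrite expr1 mul0r.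
have cp : 0 < c by rewrite lt_def cn0 c0.
have [h [hp ch]] : exists h, 0 < h /\ c = (1 + h)^-1.
  exists (c^-1 - 1); split; first by rewrite subr_gt0 invf_gt1.
  by rewrite addrC subrK invrK.
have [k hk] := archiC (divr_ge0 D0 (ltW (mulr_gt0 e0 hp))).
exists k.
have ck : c ^+ k = ((1 + h) ^+ k)^-1 by rewrite ch exprVn.
rewrite ck.
have pos : 0 < (1 + h) ^+ k by rewrite exprn_gt0 // addr_gt0.
rewrite mulrC ltr_pdivrMr //.
apply: lt_le_trans (_ : eps * (1 + h *+ k) <= _); last first.
  rewrite ler_wpM2l //; [by apply: ltW | by apply: bernoulli_ineq; apply: ltW].
move: hk; rewrite ltr_pdivrMr ?mulr_gt0 // => hk.
apply: lt_le_trans hk _.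
rewrite mulrDr -[X in X <= _]add0r.
by apply: lerD; [rewrite mulr1; exact: ltW | rewrite mulrnAr mulr_natl].
Qed.

Lemma nat_min (f : nat -> nat) : exists N, forall k, (f N <= f k)%N.
Proof.
suff H : forall b N, (f N <= b)%N -> exists N', forall k, (f N' <= f k)%N.
  exact: (H (f 0%N) 0%N).
elim=> [|b IH] N hN.
  by exists N => k; move: hN; rewrite leqn0 => /eqP ->.
case: (classic (exists k, (f k < f N)%N)) => [[k hk]|nk].
  by apply: (IH k); rewrite -ltnS; apply: leq_trans hk hN.
exists N => k; rewrite leqNgt; apply/negP => hk; apply: nk; by exists k.
Qed.

Section Main.
Variable C : numClosedFieldType.
Implicit Types (m p q : nat).

Definition Qproj m (Q : 'M[C]_m) := adjmx Q = Q /\ Q *m Q = Q.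

Lemma psd_congr p q (M : 'M[C]_p) (X : 'M[C]_(p, q)) : psd M -> psd (adjmx X *m M *m X).
Proof.
move=> hM x; rewrite -!mulmxA inner_adj adjmxK; exact: hM.
Qed.

Lemma proj_compl m (Q : 'M[C]_m) : Qproj Q -> Qproj (1%:M - Q).
Proof.
move=> [h1 h2]; split; first by rewrite adjmxB adjmx1 h1.
by rewrite mulmxBl mul1mx mulmxBr mulmx1 h2 subrr subr0.
Qed.

Lemma psd_proj m (Q : 'M[C]_m) : Qproj Q -> psd Q.
Proof.
move=> [h1 h2] x; rewrite -{1}h2 -mulmxA inner_adj h1; exact: inner_ge0.
Qed.

Lemma psd_herm_sq m (S : 'M[C]_m) x : psd S -> inner x (S *m S *m x) = inner (S *m x) (S *m x).
Proof. by move=> hS; rewrite -mulmxA inner_adj (psd_herm hS). Qed.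

Variable n : nat.
Variable u : 'cV[C]_n.
Variable R0 : 'M[C]_n.
Hypothesis hu : inner u u = 1.
Hypothesis hR0 : psd R0.

Local Notation P := (ketbra u u).
Local Notation Rn := (Rseq (ketbra u u) R0).

Lemma P_proj : Qproj P.
Proof.
rewrite /ketbra; split; first by rewrite adjmxM adjmxK.
by rewrite mulmxA -(mulmxA u) adjmx_mx11 hu mulmx1.
Qed.

Lemma Rn_S k : Rn k.+1 = psqrt (Rn k) *m (1%:M - P) *m psqrt (Rn k).
Proof. by []. Qed.

Lemma Rn_psd k : psd (Rn k).
Proof.
elim: k => [//|k IH]; rewrite Rn_S.
have [hS _] := psqrtP IH.
rewrite -{1}(psd_herm hS); apply: psd_congr.
exact/psd_proj/proj_compl/P_proj.
Qed.

Lemma Rn_herm k : adjmx (Rn k) = Rn k.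
Proof. exact: psd_herm (Rn_psd k). Qed.

Lemma K_mono k (x : 'cV[C]_n) : Rn k *m x = 0 -> Rn k.+1 *m x = 0.
Proof.
move=> h; have [hS eS] := psqrtP (Rn_psd k).
have : inner x (psqrt (Rn k) *m psqrt (Rn k) *m x) = 0 by rewrite eS h inner0r.
rewrite psd_herm_sq // => /eqP; rewrite inner_eq0 => /eqP Sx.
by rewrite Rn_S -mulmxA Sx mulmx0.
Qed.

Lemma E_iff k (x : 'cV[C]_n) : orthP (kerP (Rn k)) x <-> colspan (Rn k) x.
Proof. exact: ran_psd (Rn_psd k). Qed.

Lemma E_mono k (x : 'cV[C]_n) : orthP (kerP (Rn k.+1)) x -> orthP (kerP (Rn k)) x.
Proof. by move=> h y hy; apply: h; apply: K_mono. Qed.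

Lemma sub_S k : ((Rn k.+1)^T <= (Rn k)^T)%MS.
Proof.
apply: colspan_sub => x /E_iff /E_mono /E_iff; exact.
Qed.

Lemma sub_le N k : (N <= k)%N -> ((Rn k)^T <= (Rn N)^T)%MS.
Proof.
elim: k => [|k IH]; first by rewrite leqn0 => /eqP ->.
rewrite leq_eqVlt => /orP[/eqP ->//|]; rewrite ltnS => /IH.
exact: submx_trans (sub_S k).
Qed.

Lemma stab : exists N, forall k, (N <= k)%N -> ((Rn N)^T <= (Rn k)^T)%MS.
Proof.
have [N hN] := nat_min (fun k => \rank (Rn k)^T).
exists N => k kN.
have sub := sub_le kN.
have [_ <-] := mxrank_leqif_sup sub.
by rewrite eqn_leq hN mxrankS.
Qed.

End Main.

Section Stab.
Variable C : numClosedFieldType.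
Variable n : nat.
Variable u : 'cV[C]_n.
Variable R0 : 'M[C]_n.
Hypothesis hu : inner u u = 1.
Hypothesis hR0 : psd R0.
Local Notation P := (ketbra u u).
Local Notation Rn := (Rseq (ketbra u u) R0).
Variable N : nat.
Hypothesis hN : forall k, (N <= k)%N -> ((Rn N)^T <= (Rn k)^T)%MS.

Definition Wm := schmidt (row_base (Rn N)^T).
Definition Vm : 'M[C]_(n, \rank (Rn N)^T) := Wm^T.

Lemma V_iso : adjmx Vm *m Vm = 1%:M.
Proof.
have uW : Wm \is unitarymx by apply: schmidt_unitarymx; exact: rank_leq_col.
have /unitarymxP e := uW.
apply: trmx_inj; rewrite trmx_mul trmx1 /Vm trmxK -e.
by rewrite /adjmx trmxK.
Qed.

Lemma inV_iff k x : (N <= k)%N -> (colspan Vm x <-> colspan (Rn k) x).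
Proof.
move=> kN; rewrite !colspan_submx /Vm trmxK /Wm.
rewrite (eqmx_schmidt_free (row_base_free _)) eq_row_base.
split=> h; first exact: (submx_trans h (hN kN)).
exact: (submx_trans h (sub_le hu hR0 kN)).
Qed.

Lemma inV_E k x : (N <= k)%N -> (colspan Vm x <-> orthP (kerP (Rn k)) x).
Proof.
move=> kN; split=> [/(inV_iff _ kN) /(E_iff hu hR0)//|/(E_iff hu hR0) /(inV_iff _ kN)//].
Qed.

Section K.
Variable k : nat.
Hypothesis kN : (N <= k)%N.
Local Notation R := (Rn k).
Local Notation V := Vm.
Local Notation T := (adjmx Vm *m Rn k *m Vm).

Lemma hR : psd R. Proof. exact: Rn_psd hu hR0 k. Qed.
Lemma hRH : adjmx R = R. Proof. exact: Rn_herm hu hR0 k. Qed.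

Lemma PiR : V *m adjmx V *m R = R.
Proof.
have [Y ->] : exists Y, R = V *m Y.
  by apply: colspan_fact => x /(inV_iff _ kN).
by rewrite -mulmxA (mulmxA (adjmx V)) V_iso mul1mx.
Qed.

Lemma RPi : R *m (V *m adjmx V) = R.
Proof.
apply: adjmx_inj; rewrite adjmxM adjmxM adjmxK hRH.
by rewrite PiR.
Qed.

Lemma R_decomp : R = V *m T *m adjmx V.
Proof. by rewrite !mulmxA PiR -mulmxA RPi. Qed.

Lemma p3a x : colspan V x -> colspan V (R *m x).
Proof. by move=> _; apply/(inV_iff _ kN); exists x. Qed.

Lemma p3c x : orthP (colspan V) x -> R *m x = 0.
Proof.
move=> h.
have hy : colspan V (R *m (R *m x)) by apply/(inV_iff _ kN); exists (R *m x).
have := h _ hy; rewrite inner_conj mulmxA psd_herm_sq; last exact: hR.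
by move/eqP; rewrite conjC_eq0 inner_eq0 => /eqP.
Qed.

Lemma p3b x : orthP (colspan V) x -> orthP (colspan V) (R *m x).
Proof. by move=> /p3c -> y _; rewrite inner0r. Qed.

Lemma p3d : psd T.
Proof. exact: psd_congr hR. Qed.

Lemma p3e (y : 'cV[C]_(\rank (Rn N)^T)) : y != 0 -> 0 < inner y (T *m y).
Proof.
move=> ynz.
have e : inner y (T *m y) = inner (V *m y) (R *m (V *m y)).
  by rewrite -!mulmxA inner_adj adjmxK.
rewrite lt_def p3d andbT e; apply/negP => /eqP h0.
have ker := psd_ker hR h0.
have inE : colspan V (V *m y) by exists y.
have := (proj1 (inV_E _ kN) inE) _ ker.
move/eqP; rewrite inner_eq0 => /eqP Vy.
move: ynz; rewrite -[y]mul1mx -V_iso -mulmxA Vy mulmx0 eqxx.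
by [].
Qed.

Lemma S_decomp : psqrt R = V *m psqrt T *m adjmx V.
Proof.
have [hQ eQ] := psqrtP p3d.
move: hQ eQ; set Q := psqrt T => hQ eQ.
apply: psd_sqrt_eq; first exact: hR.
  by rewrite -{1}[V]adjmxK; apply: psd_congr.
rewrite -!mulmxA (mulmxA (adjmx V)) V_iso mul1mx !mulmxA -(mulmxA V) eQ.
by rewrite -R_decomp.
Qed.

Lemma p4 : adjmx Vm *m Rn k.+1 *m Vm
  = psqrt T *m (1%:M - ketbra (adjmx V *m u) (adjmx V *m u)) *m psqrt T.
Proof.
rewrite Rn_S S_decomp.
set Q := psqrt T.
have -> : adjmx V *m (V *m Q *m adjmx V *m (1%:M - P) *m (V *m Q *m adjmx V)) *m V
    = Q *m (adjmx V *m (1%:M - P) *m V) *m Q.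
  by rewrite !mulmxA V_iso mul1mx -!mulmxA V_iso mulmx1.
congr (_ *m _ *m _).
rewrite mulmxBr mulmxBl mulmx1 V_iso /ketbra adjmxM adjmxK.
by rewrite !mulmxA.
Qed.

End K.

Definition uE := adjmx Vm *m u.
Definition Tm k := adjmx Vm *m Rn k *m Vm.

Lemma det_step k : (N <= k)%N -> \det (Tm k.+1) = (1 - inner uE uE) * \det (Tm k).
Proof.
move=> kN; rewrite /Tm p4 // !det_mulmx /ketbra det_sylvester adjmx_mx11 mxE eqxx mulr1n.
have [_ eQ] := psqrtP (p3d k).
rewrite -[in RHS]eQ det_mulmx /uE.
by rewrite [LHS]mulrAC [LHS]mulrC.
Qed.

End Stab.

Lemma posdef_det (C : numClosedFieldType) m (A : 'M[C]_m) :
  (forall y : 'cV_m, y != 0 -> 0 < inner y (A *m y)) -> \det A != 0.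
Proof.
move=> h; apply/negP => /det0P [v vnz vA].
have : adjmx v != 0 by rewrite adjmx_eq0.
move/h; rewrite /inner adjmxK mulmxA vA mul0mx mxE.
by rewrite ltxx.
Qed.

Unset Implicit Arguments. Set Strict Implicit.

Theorem proposition2p3 (R : realType) (n : nat) (u : 'cV[R[i]]_n) (R0 : 'M[R[i]]_n) :
  vnorm u = 1 -> psd R0 ->
  let P := ketbra u u in
  let Rn := Rseq P R0 in
  let K := fun k => kerP (Rn k) in
  let E := fun k => orthP (K k) in
  (* (1) *)
  ((forall k x, K k x -> K k.+1 x) /\ (forall k x, E k.+1 x -> E k x)) /\
  (* (2): E is represented by an isometry V whose columns form an
     orthonormal basis of E *)
  exists (N d : nat) (V : 'M[R[i]]_(n, d)),
    adjmx V *m V = 1%:M /\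
    let inE := colspan V in
    (forall k, (N <= k)%N -> forall x, E k x <-> inE x) /\
    (* T k = R_k|_E in the orthonormal basis V *)
    let T := fun k => adjmx V *m Rn k *m V in
    (* (3) *)
    (forall k, (N <= k)%N ->
       (forall x, inE x -> inE (Rn k *m x)) /\
       (forall x, orthP inE x -> orthP inE (Rn k *m x)) /\
       (forall x, orthP inE x -> Rn k *m x = 0) /\
       psd (T k) /\
       (forall y : 'cV_d, y != 0 -> 0 < inner y (T k *m y))) /\
    (* (4) u_E = P_E u, in coordinates *)
    let uE := adjmx V *m u in
    (forall k, (N <= k)%N ->
       T k.+1 = psqrt (T k) *m (1%:M - ketbra uE uE) *m psqrt (T k)) /\
    (* (5) *)
    (uE = 0 -> forall k, (N <= k)%N -> T k.+1 = T k) /\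
    (uE != 0 ->
       (0 < vnorm uE /\ vnorm uE < 1) /\
       (forall k, (N <= k)%N -> \det (T k.+1) = (1 - vnorm uE ^+ 2) * \det (T k)) /\
       (forall k, (N <= k)%N -> \det (T k) = (1 - vnorm uE ^+ 2) ^+ (k - N) * \det (T N)) /\
       (forall eps : R[i], 0 < eps ->
          exists M, forall k, (M <= k)%N -> `|\det (T k)| < eps)).
Proof.
move=> hv hR0 P Rn K E.
have hu : inner u u = 1.
  by rewrite -[LHS]sqrtCK -/(vnorm u) hv expr1n.
split.
  by split=> k x; [exact (K_mono hu hR0 (k:=k) (x:=x)) | exact (E_mono hu hR0 (k:=k) (x:=x))].
have [N hN] := stab hu hR0.
exists N, (\rank (Rn N)^T), (Vm u R0 N).
split; first exact: V_iso.
move=> inE; split.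
  by move=> k kN x; split=> /(inV_E hu hR0 hN x kN).
move=> T; split.
  move=> k kN; split; first exact (p3a hu hR0 hN kN).
  split; first exact (p3b hu hR0 hN kN).
  split; first exact (p3c hu hR0 hN kN).
  split; first exact (p3d hu hR0 (N:=N) k).
  exact (p3e hu hR0 hN kN).
move=> uE'; split.
  by move=> k kN; exact (p4 hu hR0 hN kN).
split.
  move=> uE0 k kN; rewrite /T p4 // -/uE' uE0 /ketbra mul0mx subr0 mulmx1.
  by have [_ ->] := psqrtP (p3d hu hR0 (N:=N) k).
move=> uEnz.
set a := inner uE' uE'.
have a0 : 0 < a by apply: inner_gt0.
have va : vnorm uE' ^+ 2 = a by rewrite /vnorm sqrtCK.
have a1 : a <= 1.
  pose Pi := Vm u R0 N *m adjmx (Vm u R0 N).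
  have hPi : Qproj Pi.
    split; first by rewrite /Pi adjmxM adjmxK.
    by rewrite /Pi -mulmxA (mulmxA (adjmx _)) V_iso mul1mx.
  have := psd_proj (proj_compl hPi) u.
  rewrite mulmxBl mul1mx innerDr innerNr hu /Pi -mulmxA inner_adj.
  by rewrite subr_ge0.
have dstep : forall k, (N <= k)%N -> \det (T k.+1) = (1 - a) * \det (T k).
  by move=> k kN; exact (det_step hu hR0 hN kN).
have an1 : a != 1.
  apply/eqP => ea.
  have := @posdef_det _ _ (T N.+1) (p3e hu hR0 hN (leqnSn N)).
  by rewrite -/(T N.+1) dstep // ea subrr mul0r eqxx.
have dpow : forall k, (N <= k)%N -> \det (T k) = (1 - a) ^+ (k - N) * \det (T N).
  move=> k /subnKC <-; elim: (k - N)%N => [|m IH]; first by rewrite addn0 subnn expr0 mul1r.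
  by rewrite addnS dstep ?leq_addr // IH addKn -addnS addKn exprS mulrA.
split.
  split; first by rewrite /vnorm sqrtC_gt0.
  rewrite /vnorm -sqrtC1 ltr_sqrtC ?nnegrE ?ler01 ?inner_ge0 //.
  by rewrite lt_neqAle an1 a1.
rewrite va; split; first exact: dstep.
split; first exact: dpow.
move=> eps e0.
have c0 : 0 <= 1 - a by rewrite subr_ge0.
have c1 : 1 - a < 1 by rewrite ltrBlDr ltrDl.
have [M hM] := geom_small c0 c1 (normr_ge0 (\det (T N))) e0.
exists (M + N)%N => k kMN.
have kN : (N <= k)%N by apply: leq_trans kMN; rewrite leq_addl.
rewrite dpow // normrM normrX (ger0_norm c0).
apply: hM; by rewrite leq_subRL // addnC.
Qed.
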